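(* Under the standing setting and assumptions (A1)–(A3) described in the context, the optimal payoff map $\mathcal R$ is outer semicontinuous at every $X\in\mathcal X$.
   Context: Let $\mathcal X$ be a Hausdorff, first countable, locally convex topological vector space over $\mathbb R$, partially ordered by a partial order $\geq$ with positive cone $\mathcal X_+=\{X\in\mathcal X: X\geq 0\}$. Let $\mathcal M\subset\mathcal X$ be a vector subspace with $1<\dim\mathcal M<\infty$, carrying the relative topology, and let $\pi:\mathcal M\to\mathbb R$ be linear. Standing assumptions: (A1) there is $U\in\mathcal M\cap\mathcal X_+$ with $\pi(U)=1$; (A2) $\mathcal A\subsetneq\mathcal X$ is closed, contains $0$, and satisfies $\mathcal A+\mathcal X_+\subset\mathcal A$; (A3) the map $\rho:\mathcal X\to[-\infty,\infty]$, $\rho(X)=\inf\{\pi(Z): Z\in\mathcal M,\ X+Z\in\mathcal A\}$, is finitely valued and continuous. The optimal payoff map is $\mathcal R(X)=\{Z\in\mathcal M: X+Z\in\mathcal A,\ \pi(Z)=\rho(X)\}$. $\mathcal R$ is outer semicontinuous at $X$ if for every $Z\notin\mathcal R(X)$ there are open neighborhoods $\mathcal U_X\subset\mathcal X$ of $X$ and $\mathcal U_Z\subset\mathcal M$ of $Z$ such that $\mathcal R(Y)\cap\mathcal U_Z=\emptyset$ for all $Y\in\mathcal U_X$. *)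

(* Defs.v *)
From HB Require Import structures.
From mathcomp Require Import all_boot all_order all_algebra.
From mathcomp Require Import all_classical all_reals all_analysis.
Set Implicit Arguments. Unset Strict Implicit. Unset Printing Implicit Defensive.
Import Order.TTheory GRing.Theory Num.Theory.
Import numFieldTopology.Exports.
Local Open Scope classical_set_scope.
Local Open Scope ring_scope.

Definition first_countable (T : topologicalType) : Prop :=
  forall x : T, exists B : nat -> set T,
    (forall n, nbhs x (B n)) /\ (forall U, nbhs x U -> exists n, B n `<=` U).

Definition vector_order (R : realType) (E : lmodType R) (le : E -> E -> Prop) : Prop :=
  [/\ (forall x, le x x),
      (forall x y, le x y -> le y x -> x = y),
      (forall x y z, le x y -> le y z -> le x z),
      (forall x y z, le x y -> le (x + z) (y + z)) &
      (forall (a : R) x y, 0 <= a -> le x y -> le (a *: x) (a *: y))].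

Definition pos_cone (R : realType) (E : lmodType R) (le : E -> E -> Prop) : set E :=
  [set x | le 0 x].

Definition lin_subspace (R : realType) (E : lmodType R) (M : set E) : Prop :=
  [/\ M 0, (forall x y, M x -> M y -> M (x + y)) & (forall (a : R) x, M x -> M (a *: x))].

Definition has_dim (R : realType) (E : lmodType R) (M : set E) (n : nat) : Prop :=
  exists b : 'I_n -> E,
    [/\ (forall i, M (b i)),
        (forall c : 'I_n -> R, \sum_(i < n) c i *: b i = 0 -> forall i, c i = 0) &
        (forall z, M z -> exists c : 'I_n -> R, z = \sum_(i < n) c i *: b i)].

(* pi : M -> R linear (given as a function on E; only its values on M matter) *)
Definition linear_on (R : realType) (E : lmodType R) (M : set E) (pi : E -> R) : Prop :=
  forall (a : R) x y, M x -> M y -> pi (a *: x + y) = a * pi x + pi y.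

Definition rho (R : realType) (E : lmodType R) (M A : set E) (pi : E -> R) (X : E)
  : \bar R :=
  ereal_inf [set (pi Z)%:E | Z in [set Z | M Z /\ A (X + Z)]].

Definition optpay (R : realType) (E : lmodType R) (M A : set E) (pi : E -> R) (X : E)
  : set E :=
  [set Z | [/\ M Z, A (X + Z) & (pi Z)%:E = rho M A pi X]].

(* outer semicontinuity of the optimal payoff map at X; the neighbourhood
   U_Z of Z is open in M for the relative topology, i.e. U_Z = V `&` M with
   V open in E *)
Definition outer_semicontinuous_at (R : realType) (E : tvsType R)
  (M A : set E) (pi : E -> R) (X : E) : Prop :=
  forall Z, M Z -> ~ optpay M A pi X Z ->
    exists UX : set E, exists V : set E,
      [/\ open UX, UX X, open V, V Z &
          forall Y, UX Y -> optpay M A pi Y `&` (V `&` M) = set0].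

(* Main.v *)
Require Import Defs.
From HB Require Import structures.
From mathcomp Require Import all_boot all_order all_algebra.
From mathcomp Require Import all_classical all_reals all_analysis.
Import Order.TTheory GRing.Theory Num.Theory.
Import numFieldTopology.Exports.
Local Open Scope classical_set_scope.
Local Open Scope ring_scope.

Lemma split_nbhs (R : realType) (E : tvsType R) (O : set E) (X Z : E) :
  nbhs (X + Z) O -> exists UX V : set E,
  [/\ open UX, UX X, open V, V Z & forall Y Z', UX Y -> V Z' -> O (Y + Z')].
Proof.
move=> nO.
have := @add_continuous E (X, Z) O.
move=> /(_ nO) /= [[A1 A2] /= [nA1 nA2] sub].
exists (interior A1), (interior A2); split.
- exact: open_interior.
- exact: nA1.
- exact: open_interior.
- exact: nA2.
- move=> Y Z' /interior_subset h1 /interior_subset h2.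
  exact: (sub (Y, Z')).
Qed.

Arguments split_nbhs {R E O X Z}.

Theorem mainTheorem3 (R : realType) (E : tvsType R)
  (le : E -> E -> Prop) (M A : set E) (pi : E -> R) (n : nat) :
  hausdorff_space E ->
  first_countable E ->
  vector_order le ->
  lin_subspace M ->
  (1 < n)%N -> has_dim M n ->
  linear_on M pi ->
  (* (A1) *)
  (exists U, [/\ M U, pos_cone le U & pi U = 1]) ->
  (* (A2) *)
  closed A -> A 0 -> A <> setT ->
  (forall X P, A X -> pos_cone le P -> A (X + P)) ->
  (* (A3) *)
  (forall X, rho M A pi X \is a fin_num) ->
  continuous (fun X => fine (rho M A pi X)) ->
  forall X, outer_semicontinuous_at M A pi X.
Proof.
move=> _ _ _ [M0 MD MZ] _ _ lpi _ cA _ _ _ fin hcont X Z MZZ nopt.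
have F1 : forall Y Z', optpay M A pi Y Z' -> (0 <= fine (rho M A pi (Y + Z')))%R.
  move=> Y Z' [MZ' AZ' eZ'].
  have h : (0%:E <= rho M A pi (Y + Z'))%E.
    apply: le_ereal_inf_tmp => _ [W [MW AW] <-].
    have feas : M (Z' + W) /\ A (Y + (Z' + W)) by split; [exact: MD | rewrite addrA].
    have : (rho M A pi Y <= (pi (Z' + W))%:E)%E.
      by apply: ereal_inf_lbound; exists (Z' + W).
    rewrite -eZ' lee_fin.
    have := lpi 1 Z' W MZ' MW; rewrite scale1r mul1r => ->.
    by rewrite lerDl.
  have := fin (Y + Z'); case: (rho M A pi (Y + Z')) h => //= r; rewrite lee_fin.
have [AXZ|nAXZ] := pselect (A (X + Z)); last first.
  have nO : nbhs (X + Z) (~` A) by apply: open_nbhs_nbhs; split => //; exact: closed_openC.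
  have [UX [V [oU UXX oV VZ H]]] := split_nbhs nO.
  exists UX, V; split => // Y UY; apply/seteqP; split => // Z' [[_ AYZ' _] [VZ' _]].
  exact: (H Y Z' UY VZ' AYZ').
have neq : (pi Z)%:E <> rho M A pi X by move=> e; apply: nopt.
have le1 : (rho M A pi X <= (pi Z)%:E)%E.
  by apply: ereal_inf_lbound; exists Z.
have lt1 : (rho M A pi X < (pi Z)%:E)%E by rewrite lt_neqAle le1 andbT; apply/eqP => e; apply: neq.
have [_ [Z'' [MZ'' AZ''] <-] lt2] := ereal_inf_lt lt1.
set W := -1 *: Z + Z''.
have MW : M W by apply: MD => //; apply: MZ.
have piW : pi W = - pi Z + pi Z'' by rewrite /W lpi // mulN1r.
have neg : (fine (rho M A pi (X + Z)) < 0)%R.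
  have : (rho M A pi (X + Z) <= (pi W)%:E)%E.
    apply: ereal_inf_lbound; exists W => //; split => //.
    by rewrite /W scaleN1r addrA addrK.
  have := fin (X + Z); case: (rho M A pi (X + Z)) => //= r _.
  rewrite lee_fin piW => h; apply: (le_lt_trans h).
  by rewrite addrC subr_lt0 -lte_fin.
have nO : nbhs (X + Z) [set Y | (fine (rho M A pi Y) < 0)%R].
  have N0 : nbhs (fine (rho M A pi (X + Z))) [set r : R | (r < 0)%R].
    by apply: open_nbhs_nbhs; split => //; exact: open_lt.
  exact: (hcont (X + Z) _ N0).
have [UX [V [oU UXX oV VZ H]]] := split_nbhs nO.
exists UX, V; split => // Y UY; apply/seteqP; split => // Z' [opt [VZ' _]].
have := H Y Z' UY VZ'; have := F1 Y Z' opt => /= a b.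
by have := le_lt_trans a b; rewrite ltxx.
Qed.
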